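(* For every set $\Gamma\cup\{\varphi\}$ of formulas over $\Sigma^\circ$: if $\Gamma\vDash^{\mathsf{RN}}_{\mathcal{M}_{\bf Cila}}\varphi$ then $\Gamma\vdash_{\bf Cila}\varphi$.
   Context: $\Sigma^\circ$ has unary $\neg,\circ$ and binary $\wedge,\vee,\to$. ${\bf Cila}$ is the Hilbert calculus with Modus Ponens as only rule and axiom schemata: $\alpha\to(\beta\to\alpha)$; $(\alpha\to(\beta\to\gamma))\to((\alpha\to\beta)\to(\alpha\to\gamma))$; $\alpha\to(\beta\to(\alpha\wedge\beta))$; $(\alpha\wedge\beta)\to\alpha$; $(\alpha\wedge\beta)\to\beta$; $\alpha\to(\alpha\vee\beta)$; $\beta\to(\alpha\vee\beta)$; $(\alpha\to\gamma)\to((\beta\to\gamma)\to((\alpha\vee\beta)\to\gamma))$; $\alpha\vee\neg\alpha$; $\alpha\vee(\alpha\to\beta)$; $\circ\alpha\to(\alpha\to(\neg\alpha\to\beta))$; $\neg(\alpha\wedge\neg\alpha)\to\circ\alpha$; $\neg\circ\alpha\to(\alpha\wedge\neg\alpha)$; $\neg\neg\alpha\to\alpha$; $(\circ\alpha\wedge\circ\beta)\to\circ(\alpha\#\beta)$ for $\#\in\{\vee,\wedge,\to\}$. $\mathcal{A}_{\bf Cila}$ is the $\Sigma^\circ$-multialgebra with universe $\{F,t,T\}$, $D=\{t,T\}$, and: $F\tilde\vee F=\{F\}$, $F\tilde\vee T=T\tilde\vee F=T\tilde\vee T=\{T\}$, $x\tilde\vee y=D$ whenever $t\in\{x,y\}$;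 $x\tilde\wedge y=\{F\}$ if $F\in\{x,y\}$, $T\tilde\wedge T=\{T\}$, $t\tilde\wedge t=t\tilde\wedge T=T\tilde\wedge t=D$; $\tilde\neg F=\{T\}$, $\tilde\neg t=D$, $\tilde\neg T=\{F\}$; $F\tilde\to F=F\tilde\to T=T\tilde\to T=\{T\}$, $t\tilde\to F=T\tilde\to F=\{F\}$, $x\tilde\to t=D$ for all $x$, $t\tilde\to T=D$; $\tilde\circ F=\tilde\circ T=\{T\}$, $\tilde\circ t=\{F\}$. A valuation is a map with $\nu(\#\alpha)\in\tilde\#\nu(\alpha)$ and $\nu(\alpha\#\beta)\in\nu(\alpha)\tilde\#\nu(\beta)$. $\mathcal{F}_{\bf Cila}$ is the set of valuations with $\nu(\alpha)=t\Rightarrow\nu(\alpha\wedge\neg\alpha)=T$ for all $\alpha$. $\Gamma\vDash^{\mathsf{RN}}_{\mathcal{M}_{\bf Cila}}\varphi$ iff every $\nu\in\mathcal{F}_{\bf Cila}$ with $\nu[\Gamma]\subseteq D$ has $\nu(\varphi)\in D$. *)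

(* Defs.v *)
Inductive form : Type :=
| Var  : nat -> form
| Neg  : form -> form
| Circ : form -> form
| And  : form -> form -> form
| Or   : form -> form -> form
| Imp  : form -> form -> form.

Inductive CilaAxiom : form -> Prop :=
| Ax1 a b : CilaAxiom (Imp a (Imp b a))
| Ax2 a b c : CilaAxiom (Imp (Imp a (Imp b c)) (Imp (Imp a b) (Imp a c)))
| Ax3 a b : CilaAxiom (Imp a (Imp b (And a b)))
| Ax4 a b : CilaAxiom (Imp (And a b) a)
| Ax5 a b : CilaAxiom (Imp (And a b) b)
| Ax6 a b : CilaAxiom (Imp a (Or a b))
| Ax7 a b : CilaAxiom (Imp b (Or a b))
| Ax8 a b c : CilaAxiom (Imp (Imp a c) (Imp (Imp b c) (Imp (Or a b) c)))
| Ax9 a : CilaAxiom (Or a (Neg a))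
| Ax10 a b : CilaAxiom (Or a (Imp a b))
| Ax11 a b : CilaAxiom (Imp (Circ a) (Imp a (Imp (Neg a) b)))
| Ax12 a : CilaAxiom (Imp (Neg (And a (Neg a))) (Circ a))
| Ax13 a : CilaAxiom (Imp (Neg (Circ a)) (And a (Neg a)))
| Ax14 a : CilaAxiom (Imp (Neg (Neg a)) a)
| Ax15or a b : CilaAxiom (Imp (And (Circ a) (Circ b)) (Circ (Or a b)))
| Ax15and a b : CilaAxiom (Imp (And (Circ a) (Circ b)) (Circ (And a b)))
| Ax15imp a b : CilaAxiom (Imp (And (Circ a) (Circ b)) (Circ (Imp a b))).

Inductive CilaDerives (Gamma : form -> Prop) : form -> Prop :=
| D_hyp phi : Gamma phi -> CilaDerives Gamma phi
| D_ax phi : CilaAxiom phi -> CilaDerives Gamma phi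
| D_mp phi psi : CilaDerives Gamma phi -> CilaDerives Gamma (Imp phi psi) ->
                 CilaDerives Gamma psi.

Inductive V3 : Type := VF | Vt | VT.

Definition designated (x : V3) : Prop := x = Vt \/ x = VT.

(** Multioperations, given as membership relations: [op x y z] means z ∈ x op y. *)
Definition mneg (x z : V3) : Prop :=
  match x with
  | VF => z = VT
  | Vt => designated z
  | VT => z = VF
  end.

Definition mcirc (x z : V3) : Prop :=
  match x with
  | VF => z = VT
  | Vt => z = VF
  | VT => z = VT
  end.

Definition mor (x y z : V3) : Prop :=
  match x, y with
  | Vt, _ | _, Vt => designated z
  | VF, VF => z = VF
  | _, _ => z = VT
  end.

Definition mand (x y z : V3) : Prop :=
  match x, y with
  | VF, _ | _, VF => z = VF
  | VT, VT => z = VT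
  | _, _ => designated z
  end.

Definition mimp (x y z : V3) : Prop :=
  match x, y with
  | _, Vt => designated z
  | Vt, VT => designated z
  | Vt, VF | VT, VF => z = VF
  | _, _ => z = VT
  end.

Definition valuation (nu : form -> V3) : Prop :=
  forall a b : form,
    mneg (nu a) (nu (Neg a)) /\
    mcirc (nu a) (nu (Circ a)) /\
    mand (nu a) (nu b) (nu (And a b)) /\
    mor (nu a) (nu b) (nu (Or a b)) /\
    mimp (nu a) (nu b) (nu (Imp a b)).

Definition F_Cila (nu : form -> V3) : Prop :=
  valuation nu /\
  (forall a : form, nu a = Vt -> nu (And a (Neg a)) = VT).

Definition RN_consequence (Gamma : form -> Prop) (phi : form) : Prop :=
  forall nu : form -> V3, F_Cila nu ->
    (forall g, Gamma g -> designated (nu g)) -> designated (nu phi).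

(* Main.v *)
Require Import Defs.
From Stdlib Require Import Classical ClassicalEpsilon Arith Lia Cantor.

Section S.

Fixpoint enc (f : form) : nat :=
  match f with
  | Var n => Cantor.to_nat (0, n)
  | Neg a => Cantor.to_nat (1, enc a)
  | Circ a => Cantor.to_nat (2, enc a)
  | And a b => Cantor.to_nat (3, Cantor.to_nat (enc a, enc b))
  | Or a b => Cantor.to_nat (4, Cantor.to_nat (enc a, enc b))
  | Imp a b => Cantor.to_nat (5, Cantor.to_nat (enc a, enc b))
  end.

Lemma to_nat_inj p q : Cantor.to_nat p = Cantor.to_nat q -> p = q.
Proof.
  intro H. rewrite <- (Cantor.cancel_of_to p), <- (Cantor.cancel_of_to q). now rewrite H.
Qed.

Lemma pair_inj a b c d : Cantor.to_nat (a, b) = Cantor.to_nat (c, d) -> a = c /\ b = d.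
Proof. intro H. apply to_nat_inj in H. injection H. auto. Qed.

Lemma enc_inj : forall f g, enc f = enc g -> f = g.
Proof.
  induction f; destruct g; cbn [enc]; intro H; apply pair_inj in H; destruct H as [H0 H];
  try discriminate; try (f_equal; auto; fail);
  apply pair_inj in H; destruct H; f_equal; auto.
Qed.

Definition e (n : nat) : form :=
  match excluded_middle_informative (exists f, enc f = n) with
  | left H => proj1_sig (constructive_indefinite_description _ H)
  | right _ => Var 0
  end.

Lemma e_surj f : e (enc f) = f.
Proof.
  unfold e. destruct excluded_middle_informative as [H|H].
  - destruct constructive_indefinite_description as [x Hx]. simpl. now apply enc_inj.
  - exfalso. apply H. eauto.
Qed.

Lemma mono (G H : form -> Prop) x : CilaDerives G x -> (forall y, G y -> H y) -> CilaDerives H x.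
Proof.
  induction 1; intros Hs.
  - apply D_hyp; auto.
  - apply D_ax; auto.
  - eapply D_mp; eauto.
Qed.

Lemma id_der G a : CilaDerives G (Imp a a).
Proof.
  eapply D_mp. apply D_ax, (Ax1 a a).
  eapply D_mp. apply D_ax, (Ax1 a (Imp a a)).
  apply D_ax, Ax2.
Qed.

Lemma deduction G a b : CilaDerives (fun x => G x \/ x = a) b -> CilaDerives G (Imp a b).
Proof.
  induction 1.
  - destruct H as [H|H].
    + eapply D_mp. apply D_hyp, H. apply D_ax, Ax1.
    + subst. apply id_der.
  - eapply D_mp. apply D_ax, H. apply D_ax, Ax1.
  - eapply D_mp. apply IHCilaDerives1.
    eapply D_mp. apply IHCilaDerives2. apply D_ax, Ax2.
Qed.

Lemma cut G a b : CilaDerives G a -> CilaDerives (fun x => G x \/ x = a) b -> CilaDerives G b.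
Proof. intros. eapply D_mp. eauto. now apply deduction. Qed.

Variable Gamma : form -> Prop.
Variable phi : form.

Fixpoint Dn (n : nat) : form -> Prop :=
  match n with
  | 0 => Gamma
  | S n => fun x => Dn n x \/ (x = e n /\ ~ CilaDerives (fun y => Dn n y \/ y = e n) phi)
  end.

Definition Delta (x : form) : Prop := exists n, Dn n x.

Lemma Dn_mono n m x : n <= m -> Dn n x -> Dn m x.
Proof. induction 1; simpl; auto. Qed.

Lemma Dn_sub n x : Dn n x -> Delta x.
Proof. intros; exists n; auto. Qed.

Lemma compact x : CilaDerives Delta x -> exists n, CilaDerives (Dn n) x.
Proof.
  induction 1.
  - destruct H as [n Hn]. exists n. now apply D_hyp.
  - exists 0. now apply D_ax.
  - destruct IHCilaDerives1 as [n1 H1]. destruct IHCilaDerives2 as [n2 H2].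
    exists (max n1 n2). eapply D_mp.
    + eapply mono. apply H1. intros. eapply Dn_mono; [|eauto]. lia.
    + eapply mono. apply H2. intros. eapply Dn_mono; [|eauto]. lia.
Qed.

Hypothesis nder : ~ CilaDerives Gamma phi.

Lemma Dn_nder n : ~ CilaDerives (Dn n) phi.
Proof.
  induction n; simpl; auto.
  intro H. destruct (classic (CilaDerives (fun y => Dn n y \/ y = e n) phi)) as [Hc|Hc].
  - apply IHn. eapply mono. apply H. simpl. intros y [Hy|[_ Hy]]; tauto.
  - apply Hc. eapply mono. apply H. simpl. intros y [Hy|[Hy _]]; tauto.
Qed.

Lemma Delta_nder : ~ CilaDerives Delta phi.
Proof. intro H. destruct (compact _ H) as [n Hn]. exact (Dn_nder n Hn). Qed.

Lemma Delta_max p : ~ Delta p -> CilaDerives (fun y => Delta y \/ y = p) phi.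
Proof.
  intro Hp. apply NNPP. intro Hc. apply Hp. exists (S (enc p)). simpl. right.
  rewrite e_surj. split; auto. intro H. apply Hc. eapply mono. apply H.
  intros y [Hy|Hy]; [left; eapply Dn_sub; eauto | right; auto].
Qed.

Lemma closed p : CilaDerives Delta p -> Delta p.
Proof.
  intro H. apply NNPP. intro Hn. apply Delta_nder. eapply cut. apply H. now apply Delta_max.
Qed.

Lemma nphi : ~ Delta phi.
Proof. intro H. apply Delta_nder. now apply D_hyp. Qed.

Lemma ax p : CilaAxiom p -> Delta p.
Proof. intros; apply closed, D_ax; auto. Qed.

Lemma mpD a b : Delta a -> Delta (Imp a b) -> Delta b.
Proof. intros Ha Hb. apply closed. apply (D_mp _ a); apply D_hyp; auto. Qed.

Lemma notin_imp p : ~ Delta p -> Delta (Imp p phi).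
Proof. intros. apply closed, deduction, Delta_max; auto. Qed.

Lemma prime a b : Delta (Or a b) -> Delta a \/ Delta b.
Proof.
  intro H. apply NNPP. intro Hn. apply nphi.
  apply (mpD (Or a b)); auto.
  apply (mpD (Imp b phi)). apply notin_imp; tauto.
  apply (mpD (Imp a phi)). apply notin_imp; tauto.
  apply ax, Ax8.
Qed.

Lemma or_l a b : Delta a -> Delta (Or a b).
Proof. intros; eapply mpD; eauto; apply ax, Ax6. Qed.
Lemma or_r a b : Delta b -> Delta (Or a b).
Proof. intros; eapply mpD; eauto; apply ax, Ax7. Qed.
Lemma and_i a b : Delta a -> Delta b -> Delta (And a b).
Proof. intros; eapply mpD; [|eapply mpD; [|apply ax, Ax3]]; eauto. Qed.
Lemma and_l a b : Delta (And a b) -> Delta a.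
Proof. intros; eapply mpD; eauto; apply ax, Ax4. Qed.
Lemma and_r a b : Delta (And a b) -> Delta b.
Proof. intros; eapply mpD; eauto; apply ax, Ax5. Qed.
Lemma imp_i a b : Delta b -> Delta (Imp a b).
Proof. intros; eapply mpD; eauto; apply ax, Ax1. Qed.
Lemma imp_n a b : ~ Delta a -> Delta (Imp a b).
Proof. intros. destruct (prime _ _ (ax _ (Ax10 a b))); tauto. Qed.
Lemma neg_i a : ~ Delta a -> Delta (Neg a).
Proof. intros. destruct (prime _ _ (ax _ (Ax9 a))); tauto. Qed.
Lemma negneg a : Delta (Neg (Neg a)) -> Delta a.
Proof. intros; eapply mpD; eauto; apply ax, Ax14. Qed.
Lemma circ_expl a : Delta (Circ a) -> Delta a -> Delta (Neg a) -> False.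
Proof.
  intros H1 H2 H3. apply nphi. apply (mpD (Neg a)); auto. apply (mpD a); auto.
  apply (mpD (Circ a)); auto. apply ax, Ax11.
Qed.
Lemma circ_i a : ~ (Delta a /\ Delta (Neg a)) -> Delta (Circ a).
Proof.
  intros. eapply mpD; [|apply ax, Ax12]. apply neg_i. intro H'. apply H.
  split; [eapply and_l|eapply and_r]; eauto.
Qed.
Lemma negcirc a : Delta (Neg (Circ a)) -> Delta a /\ Delta (Neg a).
Proof.
  intros. assert (Delta (And a (Neg a))) by (eapply mpD; eauto; apply ax, Ax13).
  split; [eapply and_l|eapply and_r]; eauto.
Qed.

Definition nu (p : form) : V3 :=
  match excluded_middle_informative (Delta p) with
  | left _ => match excluded_middle_informative (Delta (Neg p)) with
              | left _ => Vt | right _ => VT end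
  | right _ => VF
  end.

Lemma nuF p : nu p = VF <-> ~ Delta p.
Proof. unfold nu. repeat destruct excluded_middle_informative; split; intros; try discriminate; tauto. Qed.
Lemma nut p : nu p = Vt <-> Delta p /\ Delta (Neg p).
Proof. unfold nu. repeat destruct excluded_middle_informative; split; intros; try discriminate; tauto. Qed.
Lemma nuT p : nu p = VT <-> Delta p /\ ~ Delta (Neg p).
Proof. unfold nu. repeat destruct excluded_middle_informative; split; intros; try discriminate; tauto. Qed.

Lemma nu_des p : designated (nu p) <-> Delta p.
Proof.
  unfold designated, nu. repeat destruct excluded_middle_informative; split; intros; try tauto;
  destruct H; discriminate.
Qed.

Lemma circ_class p : nu p <> Vt -> Delta (Circ p).
Proof. intros H. apply circ_i. intro. apply H, nut; auto. Qed.

Lemma combT q : Delta q -> Delta (Circ q) -> nu q = VT.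
Proof. intros. apply nuT. split; auto. intro. eapply circ_expl; eauto. Qed.

Lemma nu_val : F_Cila nu.
Proof.
  split.
  - intros a b.
    split; [|split; [|split; [|split]]].
    + destruct (nu a) eqn:Ha; simpl.
      * apply nuF in Ha. apply nuT. split. now apply neg_i. intro. apply Ha. now apply negneg.
      * apply nu_des. apply nut in Ha. tauto.
      * apply nuT in Ha. apply nuF. tauto.
    + destruct (nu a) eqn:Ha; simpl.
      * apply combT. apply circ_class. congruence. apply circ_i. intros [_ H].
        apply nuF in Ha. destruct (negcirc _ H); tauto.
      * apply nuF. intro. apply nut in Ha. apply (circ_expl a); tauto.
      * apply combT. apply circ_class. congruence. apply circ_i. intros [_ H].
        apply nuT in Ha. destruct (negcirc _ H); tauto.
    + destruct (nu a) eqn:Ha, (nu b) eqn:Hb; simpl;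
      try (apply nuF; intro Hab;
           first [apply nuF in Ha; apply Ha; eapply and_l; eauto
                 |apply nuF in Hb; apply Hb; eapply and_r; eauto]);
      try (apply nu_des; apply and_i;
           first [apply nut in Ha | apply nuT in Ha]; first [apply nut in Hb | apply nuT in Hb]; tauto).
      apply combT.
      * apply nuT in Ha. apply nuT in Hb. apply and_i; tauto.
      * eapply mpD; [|apply ax, Ax15and]. apply and_i; apply circ_class; congruence.
    + destruct (nu a) eqn:Ha, (nu b) eqn:Hb; simpl;
      try (apply nu_des; first [apply or_l; apply nu_des; rewrite Ha; red; auto; fail
                               |apply or_r; apply nu_des; rewrite Hb; red; auto; fail]);
      try (apply combT;
        [ first [apply or_l; apply nu_des; rewrite Ha; red; auto; fail
                |apply or_r; apply nu_des; rewrite Hb; red; auto; fail]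
        | eapply mpD; [|apply ax, Ax15or]; apply and_i; apply circ_class; congruence]).
      apply nuF. intro H. apply nuF in Ha. apply nuF in Hb. destruct (prime _ _ H); tauto.

    + destruct (nu a) eqn:Ha, (nu b) eqn:Hb; simpl;
      try (apply nu_des; apply imp_i; apply nu_des; rewrite Hb; red; auto; fail);
      try (apply nuF; intro H; apply nuF in Hb; apply Hb; eapply mpD; [|apply H];
           apply nu_des; rewrite Ha; red; auto; fail);
      apply combT;
      try (eapply mpD; [|apply ax, Ax15imp]; apply and_i; apply circ_class; congruence);
      first [apply imp_n; apply nuF; auto; fail | apply imp_i; apply nu_des; rewrite Hb; red; auto].
  - intros a Ha. apply nut in Ha. apply combT.
    + apply and_i; tauto.
    + apply circ_i. intros [H1 H2]. apply (circ_expl a); try tauto.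
      eapply mpD; [|apply ax, Ax12]. auto.
Qed.

End S.

Theorem mainTheorem7 (Gamma : form -> Prop) (phi : form) :
  RN_consequence Gamma phi -> CilaDerives Gamma phi.
Proof.
  intro H. apply NNPP. intro Hn.
  pose proof (nu_val Gamma phi Hn) as HF.
  specialize (H _ HF).
  assert (designated (nu Gamma phi phi)).
  { apply H. intros g Hg. apply nu_des. exists 0. exact Hg. }
  apply nu_des in H0. exact (nphi Gamma phi Hn H0).
Qed.
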